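(* Let $P$ be a continuous $L$-ordered set. Then ${\rm pt}_L\sigma_L(P)$, with its spectral $L$-topology, is a locally super-compact $L$-sober space.
   Context: $L$ is a frame with implication $\to$. $L$-subsets: maps to $L$; nonempty: $\bigvee A=1$; ${\rm sub}_X(A,B)=\bigwedge_xA(x)\to B(x)$. $L$-topology: $\mathcal O(X)\subseteq L^X$ closed under finite meets and arbitrary joins containing all constants $a_X$; interior $A^\circ$ = join of open sets below $A$. Super-compact: nonempty $A$ with ${\rm sub}_X(A,\bigvee_iV_i)=\bigvee_i{\rm sub}_X(A,V_i)$ for all families of open $V_i$; ${\rm SC}(X)$ their set. Locally super-compact: each open $A=\bigvee_{B\in{\rm SC}(X)}{\rm sub}_X(B,A)\wedge B^\circ$. A point of $\mathcal O(X)$: $p:\mathcal O(X)\to L$ preserving binary meets and arbitrary joins with $p(\lambda_X)=\lambda$; $[x](A)=A(x)$; $L$-sober: $x\mapsto[x]$ bijective onto the points. ${\rm pt}_L\mathcal O(X)$: the set of points with spectral $L$-topology $\{\phi(A):A\in\mathcal O(X)\}$, $\phi(A)(p)=p(A)$. $L$-order $e$ on $P$: $e(x,x)=1$, $e(x,y)\wedge e(y,z)\le e(x,z)$, $e(x,y)\wedge e(y,x)=1\Rightarrow x=y$. ${\downarrow}y(x)=e(x,y)$; $\sqcup A=x$ iff $e(x,y)={\rm sub}_P(A,{\downarrow}y)$ for all $y$; directed: nonempty and $D(x)\wedge D(y)\le\bigvee_zD(z)\wedge e(x,z)\wedge e(y,z)$; ideal: directed lower set; ${\Downarrow}x(y)=\bigwedge\{e(x,\sqcup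 I)\to I(y):I\text{ ideal with a supremum}\}$; continuous $L$-ordered set: each ${\Downarrow}x$ directed with supremum $x$ (not necessarily an $L$-dcpo). $\sigma_L(P)$: upper sets $A$ with $A(\sqcup D)=\bigvee_xA(x)\wedge D(x)$ for every directed $D$ having a supremum. *)

(* Defs.v *)
(* A frame (complete Heyting algebra) with implication. Arbitrary joins are
   indexed by subsets of the carrier; binary meets; implication right adjoint
   to meet (this gives frame distributivity). *)
Record frame := Frame {
  car :> Type;
  fle : car -> car -> Prop;
  fle_refl : forall a, fle a a;
  fle_trans : forall a b c, fle a b -> fle b c -> fle a c;
  fle_antisym : forall a b, fle a b -> fle b a -> a = b;
  fsup : (car -> Prop) -> car;
  fsup_ub : forall S a, S a -> fle a (fsup S);
  fsup_least : forall S b, (forall a, S a -> fle a b) -> fle (fsup S) b;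
  fmeet : car -> car -> car;
  fmeet_l : forall a b, fle (fmeet a b) a;
  fmeet_r : forall a b, fle (fmeet a b) b;
  fmeet_glb : forall a b c, fle c a -> fle c b -> fle c (fmeet a b);
  fimp : car -> car -> car;
  fimp_adj : forall a b c, fle (fmeet a b) c <-> fle a (fimp b c)
}.

Arguments fle {f}.
Arguments fsup {f}.
Arguments fmeet {f}.
Arguments fimp {f}.

Section Frames.
Variable L : frame.

Definition ftop : L := fsup (fun _ => True).
Definition finf (S : L -> Prop) : L := fsup (fun a => forall b, S b -> fle a b).

Section Space.
Variable X : Type.

Definition ljoin (S : (X -> L) -> Prop) : X -> L :=
  fun x => fsup (fun a => exists A, S A /\ A x = a).

Definition nonemptyL (A : X -> L) : Prop := fsup (fun a => exists x, A x = a) = ftop.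

Definition subL (A B : X -> L) : L := finf (fun a => exists x, a = fimp (A x) (B x)).

Definition is_Ltop (O : (X -> L) -> Prop) : Prop :=
  (forall A B, O A -> O B -> O (fun x => fmeet (A x) (B x))) /\
  (forall S : (X -> L) -> Prop, (forall A, S A -> O A) -> O (ljoin S)) /\
  (forall a : L, O (fun _ => a)).

Definition interior (O : (X -> L) -> Prop) (A : X -> L) : X -> L :=
  ljoin (fun B => O B /\ forall y, fle (B y) (A y)).

Definition super_compact (O : (X -> L) -> Prop) (A : X -> L) : Prop :=
  nonemptyL A /\
  forall S : (X -> L) -> Prop, (forall V, S V -> O V) ->
    subL A (ljoin S) = fsup (fun a => exists V, S V /\ subL A V = a).

Definition locally_super_compact (O : (X -> L) -> Prop) : Prop :=
  forall A, O A -> forall x,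
    A x = fsup (fun a => exists B, super_compact O B /\
                                   a = fmeet (subL B A) (interior O B x)).

Definition opens (O : (X -> L) -> Prop) := { A : X -> L | O A }.

Definition is_point (O : (X -> L) -> Prop) (p : opens O -> L) : Prop :=
  (forall A B C : opens O,
      (forall x, proj1_sig C x = fmeet (proj1_sig A x) (proj1_sig B x)) ->
      p C = fmeet (p A) (p B)) /\
  (forall (S : opens O -> Prop) (C : opens O),
      (forall x, proj1_sig C x = fsup (fun a => exists A, S A /\ proj1_sig A x = a)) ->
      p C = fsup (fun a => exists A, S A /\ p A = a)) /\
  (forall (lam : L) (C : opens O), (forall x, proj1_sig C x = lam) -> p C = lam).

Definition eval_pt (O : (X -> L) -> Prop) (x : X) : opens O -> L :=
  fun A => proj1_sig A x.

Definition L_sober (O : (X -> L) -> Prop) : Prop :=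
  (forall x, is_point O (eval_pt O x)) /\
  (forall x y, eval_pt O x = eval_pt O y -> x = y) /\
  (forall p, is_point O p -> exists x, p = eval_pt O x).

Definition pt (O : (X -> L) -> Prop) := { p : opens O -> L | is_point O p }.

Definition spectral (O : (X -> L) -> Prop) : (pt O -> L) -> Prop :=
  fun F => exists A : opens O, forall p : pt O, F p = proj1_sig p A.

End Space.

Section LOrder.
Variable P : Type.
Variable e : P -> P -> L.

Definition is_Lorder : Prop :=
  (forall x, e x x = ftop) /\
  (forall x y z, fle (fmeet (e x y) (e y z)) (e x z)) /\
  (forall x y, fmeet (e x y) (e y x) = ftop -> x = y).

Definition downset (y : P) : P -> L := fun x => e x y.

Definition is_lsup (A : P -> L) (x : P) : Prop :=
  forall y, e x y = subL P A (downset y).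

Definition directed (D : P -> L) : Prop :=
  nonemptyL P D /\
  forall x y, fle (fmeet (D x) (D y))
                  (fsup (fun a => exists z, a = fmeet (D z) (fmeet (e x z) (e y z)))).

Definition lower_set (A : P -> L) : Prop :=
  forall x y, fle (fmeet (A y) (e x y)) (A x).

Definition upper_set (A : P -> L) : Prop :=
  forall x y, fle (fmeet (A x) (e x y)) (A y).

Definition ideal (I : P -> L) : Prop := directed I /\ lower_set I.

Definition waybelow (x : P) : P -> L :=
  fun y => finf (fun a => exists (I : P -> L) (s : P),
                    ideal I /\ is_lsup I s /\ a = fimp (e x s) (I y)).

Definition continuous_Lordered : Prop :=
  forall x, directed (waybelow x) /\ is_lsup (waybelow x) x.

Definition sigmaL : (P -> L) -> Prop :=
  fun A => upper_set A /\
    forall (D : P -> L) (s : P), directed D -> is_lsup D s ->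
      A s = fsup (fun a => exists x, a = fmeet (A x) (D x)).

End LOrder.
End Frames.

(* Main.v *)
Require Import Defs.
From Stdlib Require Import FunctionalExtensionality ProofIrrelevance PropExtensionality.

Lemma le_top {L : frame} (a : L) : fle a (ftop L).
Proof. apply fsup_ub. exact I. Qed.

Lemma top_le {L : frame} (a : L) : fle (ftop L) a -> a = ftop L.
Proof. intro h. apply fle_antisym; auto using le_top. Qed.

Lemma meet_mono {L : frame} (a b c d : L) : fle a c -> fle b d -> fle (fmeet a b) (fmeet c d).
Proof. intros. apply fmeet_glb; eapply fle_trans; [apply fmeet_l| |apply fmeet_r|]; auto. Qed.

Lemma meet_comm_le {L : frame} (a b : L) : fle (fmeet a b) (fmeet b a).
Proof. apply fmeet_glb; auto using fmeet_l, fmeet_r. Qed.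

Lemma meet_comm {L : frame} (a b : L) : fmeet a b = fmeet b a.
Proof. apply fle_antisym; apply meet_comm_le. Qed.

Lemma meet_assoc {L : frame} (a b c : L) : fmeet (fmeet a b) c = fmeet a (fmeet b c).
Proof.
  apply fle_antisym; repeat apply fmeet_glb;
  eauto using fle_trans, fmeet_l, fmeet_r.
Qed.

Lemma meet_top_l {L : frame} (a : L) : fmeet (ftop L) a = a.
Proof. apply fle_antisym. apply fmeet_r. apply fmeet_glb; auto using le_top, fle_refl. Qed.

Lemma meet_top_r {L : frame} (a : L) : fmeet a (ftop L) = a.
Proof. rewrite meet_comm. apply meet_top_l. Qed.

Lemma meet_idem {L : frame} (a : L) : fmeet a a = a.
Proof. apply fle_antisym. apply fmeet_l. apply fmeet_glb; apply fle_refl. Qed.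

Lemma sup_meet_le {L : frame} (S : L -> Prop) (b c : L) :
  (forall a, S a -> fle (fmeet a b) c) -> fle (fmeet (fsup S) b) c.
Proof.
  intro h. apply fimp_adj. apply fsup_least. intros a Ha. apply fimp_adj. auto.
Qed.

Lemma meet_sup_le {L : frame} (S : L -> Prop) (b c : L) :
  (forall a, S a -> fle (fmeet b a) c) -> fle (fmeet b (fsup S)) c.
Proof.
  intro h. rewrite meet_comm. apply sup_meet_le. intros. rewrite meet_comm. auto.
Qed.

Lemma le_sup {L : frame} (S : L -> Prop) (a b : L) : S a -> fle b a -> fle b (fsup S).
Proof. intros. eapply fle_trans; eauto using fsup_ub. Qed.

Lemma fsup_ext {L : frame} (S T : L -> Prop) : (forall a, S a <-> T a) -> fsup S = fsup T.
Proof.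
  intro h. apply fle_antisym; apply fsup_least; intros; apply fsup_ub; apply h; auto.
Qed.

Lemma finf_lb {L : frame} (S : L -> Prop) (b : L) : S b -> fle (finf L S) b.
Proof. intro h. apply fsup_least. intros a Ha. auto. Qed.

Lemma finf_glb {L : frame} (S : L -> Prop) (a : L) : (forall b, S b -> fle a b) -> fle a (finf L S).
Proof. intro h. apply fsup_ub. auto. Qed.

Lemma imp_mp {L : frame} (a b : L) : fle (fmeet (fimp a b) a) b.
Proof. apply fimp_adj. apply fle_refl. Qed.

Lemma imp_mp' {L : frame} (a b : L) : fle (fmeet a (fimp a b)) b.
Proof. rewrite meet_comm. apply imp_mp. Qed.

Lemma imp_top {L : frame} (a b : L) : fle a b -> fimp a b = ftop L.
Proof. intro h. apply top_le. apply fimp_adj. eapply fle_trans. apply fmeet_r. auto. Qed.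

Lemma le_trans3 {L : frame} (a b c : L) : fle a b -> fle b c -> fle a c.
Proof. apply fle_trans. Qed.

Lemma subL_le {L : frame} {X : Type} (A B : X -> L) x :
  fle (fmeet (subL L X A B) (A x)) (B x).
Proof. eapply fle_trans. apply meet_mono. apply finf_lb. exists x. reflexivity. apply fle_refl. apply imp_mp. Qed.

Lemma subL_glb {L : frame} {X : Type} (A B : X -> L) a :
  (forall x, fle (fmeet a (A x)) (B x)) -> fle a (subL L X A B).
Proof. intro h. apply finf_glb. intros b [x ->]. apply (proj1 (fimp_adj _ _ _ _)). auto. Qed.

Lemma ltrans {L : frame} {P} {e : P -> P -> L} (He : is_Lorder L P e) x y z :
  fle (fmeet (e x y) (e y z)) (e x z).
Proof. apply He. Qed.

Lemma lrefl {L : frame} {P} {e : P -> P -> L} (He : is_Lorder L P e) x : e x x = ftop L.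
Proof. apply He. Qed.

Lemma lsup_ub {L : frame} {P} {e : P -> P -> L} (He : is_Lorder L P e) D s x :
  is_lsup L P e D s -> fle (D x) (e x s).
Proof.
  intro h. pose proof (h s) as h1. rewrite (lrefl He) in h1.
  rewrite <- (meet_top_l (D x)). rewrite h1. apply (subL_le D (downset L P e s) x).
Qed.

Lemma lsup_least {L : frame} {P} {e : P -> P -> L} D s a u :
  is_lsup L P e D s -> (forall x, fle (fmeet a (D x)) (e x u)) -> fle a (e s u).
Proof. intros h h2. rewrite (h u). apply subL_glb. exact h2. Qed.

Lemma lsup_intro {L : frame} {P} {e : P -> P -> L} D s :
  (forall u x, fle (fmeet (e s u) (D x)) (e x u)) ->
  (forall u, fle (subL L P D (downset L P e u)) (e s u)) -> is_lsup L P e D s.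
Proof. intros h1 h2 u. apply fle_antisym; auto. apply subL_glb. apply h1. Qed.

Lemma upper_scott_ge {L : frame} {P} {e : P -> P -> L} (He : is_Lorder L P e) A D s :
  upper_set L P e A -> is_lsup L P e D s ->
  fle (fsup (fun a => exists x, a = fmeet (A x) (D x))) (A s).
Proof.
  intros hu hs. apply fsup_least. intros a [x ->].
  eapply fle_trans. apply meet_mono. apply fle_refl. apply (lsup_ub He D s x hs). apply hu.
Qed.

Lemma down_ideal {L : frame} {P} {e : P -> P -> L} (He : is_Lorder L P e) z :
  ideal L P e (downset L P e z).
Proof.
  split; [split|].
  - apply top_le. apply fsup_ub. exists z. unfold downset. apply lrefl; auto.
  - intros x y. unfold downset. eapply le_sup. exists z. reflexivity.
    rewrite (lrefl He), meet_top_l. apply fle_refl.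
  - intros x y. unfold downset. rewrite meet_comm. apply ltrans; auto.
Qed.

Lemma down_sup {L : frame} {P} {e : P -> P -> L} (He : is_Lorder L P e) z :
  is_lsup L P e (downset L P e z) z.
Proof.
  apply lsup_intro.
  - intros u x. unfold downset. rewrite meet_comm. apply ltrans; auto.
  - intros u. rewrite <- (meet_top_r (subL _ _ _ _)). rewrite <- (lrefl He z).
    apply (subL_le (downset L P e z) (downset L P e u) z).
Qed.

Lemma wb_le {L : frame} {P} {e : P -> P -> L} (He : is_Lorder L P e) z y :
  fle (waybelow L P e z y) (e y z).
Proof.
  rewrite <- (meet_top_r (waybelow _ _ _ _ _)). rewrite <- (lrefl He z).
  eapply fle_trans. apply meet_mono. apply finf_lb.
  exists (downset L P e z), z. split. apply down_ideal; auto. split. apply down_sup; auto.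
  reflexivity. apply fle_refl. apply imp_mp.
Qed.

Lemma wb_upper {L : frame} {P} {e : P -> P -> L} (He : is_Lorder L P e) z w y :
  fle (fmeet (waybelow L P e z y) (e z w)) (waybelow L P e w y).
Proof.
  apply finf_glb. intros b [I [s [hI [hs ->]]]]. apply (proj1 (fimp_adj _ _ _ _)).
  rewrite meet_assoc. eapply fle_trans. apply meet_mono. apply finf_lb.
  exists I, s. split; auto. apply (ltrans He). apply imp_mp.
Qed.

Lemma wb_lower {L : frame} {P} {e : P -> P -> L} (He : is_Lorder L P e) x t t' :
  fle (fmeet (waybelow L P e x t) (e t' t)) (waybelow L P e x t').
Proof.
  apply finf_glb. intros b [I [s [hI [hs ->]]]]. apply (proj1 (fimp_adj _ _ _ _)).
  rewrite meet_assoc, (meet_comm (e t' t)), <- meet_assoc.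
  eapply fle_trans. apply meet_mono. eapply fle_trans. apply meet_mono. apply finf_lb.
  exists I, s. split; auto. apply fle_refl. apply imp_mp. apply fle_refl.
  apply (proj2 hI t' t).
Qed.

Ltac msolve := match goal with
 | |- fle _ (fmeet _ _) => apply fmeet_glb; msolve
 | _ => first [ apply fle_refl | eapply fle_trans; [apply fmeet_l|]; msolve
              | eapply fle_trans; [apply fmeet_r|]; msolve ]
 end.

Lemma U_scott {L : frame} {P} {e : P -> P -> L} (He : is_Lorder L P e)
  (Hc : continuous_Lordered L P e) y :
  sigmaL L P e (fun z => waybelow L P e z y).
Proof.
  split.
  { intros x w. apply wb_upper; auto. }
  intros D s hD hs. apply fle_antisym.
  2:{ apply (upper_scott_ge He (fun z => waybelow L P e z y) D s); auto.
      intros x w. apply wb_upper; auto. }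
  set (I := fun t => fsup (fun a => exists x, a = fmeet (D x) (waybelow L P e x t))).
  assert (hI : ideal L P e I).
  { split; [split|].
    - apply top_le. rewrite <- (proj1 hD). apply fsup_least. intros a [x <-].
      rewrite <- (meet_top_r (D x)). rewrite <- (proj1 (proj1 (Hc x))).
      apply meet_sup_le. intros a [t <-]. eapply le_sup. exists t. reflexivity.
      eapply le_sup. exists x. reflexivity. apply fle_refl.
    - intros t1 t2. unfold I at 1. apply sup_meet_le. intros a [x1 ->].
      unfold I at 1. apply meet_sup_le. intros a [x2 ->].
      apply fle_trans with (fmeet (fmeet (D x1) (D x2))
         (fmeet (waybelow L P e x1 t1) (waybelow L P e x2 t2))). msolve.
      eapply fle_trans. apply meet_mono. apply (proj2 hD x1 x2). apply fle_refl.
      apply sup_meet_le. intros a [z ->].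
      apply fle_trans with (fmeet (D z) (fmeet (waybelow L P e z t1) (waybelow L P e z t2))).
      { apply fmeet_glb. msolve. apply fmeet_glb.
        - eapply fle_trans; [|apply (wb_upper He x1 z t1)]. msolve.
        - eapply fle_trans; [|apply (wb_upper He x2 z t2)]. msolve. }
      eapply fle_trans. apply meet_mono. apply fle_refl. apply (proj2 (proj1 (Hc z)) t1 t2).
      apply meet_sup_le. intros a [t ->].
      eapply le_sup. exists t. reflexivity.
      apply fmeet_glb. 2: msolve.
      eapply le_sup. exists z. reflexivity. msolve.
    - intros t' t. unfold I at 1. apply sup_meet_le. intros a [x ->].
      eapply le_sup. exists x. reflexivity. apply fmeet_glb. msolve.
      eapply fle_trans; [|apply (wb_lower He x t t')]. msolve. }
  assert (hIs : is_lsup L P e I s).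
  { apply lsup_intro.
    - intros u t. unfold I. apply meet_sup_le. intros a [x ->].
      eapply fle_trans; [|apply (ltrans He t x u)]. apply fmeet_glb.
      eapply fle_trans; [|apply (wb_le He x t)]. msolve.
      eapply fle_trans; [|apply (ltrans He x s u)]. apply fmeet_glb.
      eapply fle_trans; [|apply (lsup_ub He D s x hs)]. msolve. msolve.
    - intros u. apply (lsup_least D s); auto. intros x.
      apply (lsup_least (waybelow L P e x) x); [apply (Hc x)|]. intros t.
      eapply fle_trans; [|apply (subL_le I (downset L P e u) t)].
      apply fmeet_glb. msolve. eapply le_sup. exists x. reflexivity. msolve. }
  eapply fle_trans with (I y).
  - rewrite <- (meet_top_r (waybelow _ _ _ s y)). rewrite <- (lrefl He s).
    eapply fle_trans. apply meet_mono. apply finf_lb. exists I, s. split; auto.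
    apply fle_refl. apply imp_mp.
  - apply fsup_least. intros a [x ->]. eapply le_sup. exists x. reflexivity.
    apply meet_comm_le.
Qed.

Lemma spec_eq {L : frame} {X} (O : (X -> L) -> Prop) F :
  spectral L X O F -> exists W, F = fun p : pt L X O => proj1_sig p W.
Proof. intros [W h]. exists W. apply functional_extensionality. auto. Qed.

Lemma point_mono {L : frame} {X} (O : (X -> L) -> Prop) p (A B : opens L X O) :
  is_point L X O p -> (forall x, fle (proj1_sig A x) (proj1_sig B x)) -> fle (p A) (p B).
Proof.
  intros hp h. rewrite ((proj1 hp) A B A).
  apply fmeet_r. intros x. apply fle_antisym. apply fmeet_glb; auto. apply fle_refl. apply fmeet_l.
Qed.

Lemma spectral_top {L : frame} {X} (O : (X -> L) -> Prop) :
  is_Ltop L X O -> is_Ltop L (pt L X O) (spectral L X O).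
Proof.
  intros [hm [hj hc]]. split; [|split].
  - intros F G [A hA] [B hB].
    exists (exist _ (fun x => fmeet (proj1_sig A x) (proj1_sig B x)) (hm _ _ (proj2_sig A) (proj2_sig B))).
    intros p. rewrite hA, hB. symmetry. apply (proj1 (proj2_sig p)). reflexivity.
  - intros S hS.
    set (SA := fun W : opens L X O => S (fun p : pt L X O => proj1_sig p W)).
    assert (HC : O (ljoin L X (fun A => exists W, SA W /\ proj1_sig W = A))).
    { apply hj. intros A [W [_ <-]]. apply proj2_sig. }
    exists (exist _ _ HC). intros p.
    rewrite (proj1 (proj2 (proj2_sig p)) SA).
    + unfold ljoin. apply fsup_ext. intros a. split.
      * intros [F [hF <-]]. destruct (spec_eq O F (hS F hF)) as [W ->].
        exists W. split; auto.
      * intros [W [hW <-]]. eexists. split. apply hW. reflexivity.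
    + intros x. simpl. unfold ljoin. apply fsup_ext. intros a. split.
      * intros [A [[W [hW <-]] <-]]. exists W. auto.
      * intros [W [hW <-]]. exists (proj1_sig W). split; auto. exists W. auto.
  - intros a. exists (exist _ (fun _ => a) (hc a)). intros p. symmetry.
    apply (proj2 (proj2 (proj2_sig p))). reflexivity.
Qed.

Lemma sig_ext {A : Type} {Q : A -> Prop} (u v : {x | Q x}) : proj1_sig u = proj1_sig v -> u = v.
Proof. destruct u, v. simpl. intros ->. f_equal. apply proof_irrelevance. Qed.

Lemma spectral_sober {L : frame} {X} (O : (X -> L) -> Prop) :
  L_sober L (pt L X O) (spectral L X O).
Proof.
  split; [|split].
  - intros x. split; [|split].
    + intros A B C h. apply h.
    + intros S C h. apply h.
    + intros lam C h. apply h.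
  - intros x y h. apply sig_ext. apply functional_extensionality. intros W.
    assert (hs : spectral L X O (fun p : pt L X O => proj1_sig p W)) by (exists W; auto).
    exact (f_equal (fun f => f (exist _ _ hs)) h).
  - intros q hq.
    set (phi := fun W : opens L X O =>
          exist (spectral L X O) (fun p : pt L X O => proj1_sig p W) (ex_intro _ W (fun _ => eq_refl))).
    set (p := fun W => q (phi W)).
    assert (hp : is_point L X O p).
    { split; [|split].
      - intros A B C h. unfold p. apply (proj1 hq). intros r. simpl.
        apply (proj1 (proj2_sig r)). auto.
      - intros S C h. unfold p.
        rewrite ((proj1 (proj2 hq)) (fun G => exists A, S A /\ G = phi A)).
        + apply fsup_ext. intros a. split.
          * intros [G [[A [hA ->]] <-]]. eauto.
          * intros [A [hA <-]]. eauto.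
        + intros r. simpl. rewrite ((proj1 (proj2 (proj2_sig r))) S C h).
          apply fsup_ext. intros a. split.
          * intros [A [hA <-]]. exists (phi A). eauto.
          * intros [G [[A [hA ->]] <-]]. eauto.
      - intros lam C h. unfold p. apply (proj2 (proj2 hq)). intros r. simpl.
        apply (proj2 (proj2 (proj2_sig r))). auto. }
    exists (exist _ p hp). apply functional_extensionality. intros G.
    unfold eval_pt. destruct G as [F hF]. destruct (spec_eq O F hF) as [W ->]. simpl.
    unfold p. f_equal. apply sig_ext. reflexivity.
Qed.

Lemma sigma_Ltop {L : frame} {P} {e : P -> P -> L} (He : is_Lorder L P e) :
  is_Ltop L P (sigmaL L P e).
Proof.
  split; [|split].
  - intros A B hA hB. split.
    + intros x y. apply fmeet_glb.
      * eapply fle_trans; [|apply (proj1 hA x y)]. msolve.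
      * eapply fle_trans; [|apply (proj1 hB x y)]. msolve.
    + intros D s hD hs. apply fle_antisym.
      2:{ apply (upper_scott_ge He (fun z => fmeet (A z) (B z)) D s); auto. intros x y. apply fmeet_glb.
          * eapply fle_trans; [|apply (proj1 hA x y)]. msolve.
          * eapply fle_trans; [|apply (proj1 hB x y)]. msolve. }
      rewrite (proj2 hA D s hD hs), (proj2 hB D s hD hs).
      apply sup_meet_le. intros a [x ->]. apply meet_sup_le. intros b [y ->].
      apply fle_trans with (fmeet (fmeet (A x) (B y)) (fmeet (D x) (D y))). msolve.
      eapply fle_trans. apply meet_mono. apply fle_refl. apply (proj2 hD x y).
      apply meet_sup_le. intros a [z ->]. eapply le_sup. exists z. reflexivity.
      apply fmeet_glb. apply fmeet_glb.
      * eapply fle_trans; [|apply (proj1 hA x z)]. msolve.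
      * eapply fle_trans; [|apply (proj1 hB y z)]. msolve.
      * msolve.
  - intros S hS. assert (hu : upper_set L P e (ljoin L P S)).
    { intros x y. unfold ljoin. apply sup_meet_le. intros a [A [hA <-]].
      eapply le_sup. exists A. split; eauto. apply (proj1 (hS A hA)). }
    split; auto. intros D s hD hs. apply fle_antisym.
    2:{ apply (upper_scott_ge He (ljoin L P S) D s); auto. }
    unfold ljoin at 1. apply fsup_least. intros a [A [hA <-]].
    rewrite (proj2 (hS A hA) D s hD hs). apply fsup_least. intros a [x ->].
    eapply le_sup. exists x. reflexivity. apply meet_mono; [|apply fle_refl].
    eapply le_sup. exists A. split; eauto. apply fle_refl.
  - intros a. split.
    + intros x y. apply fmeet_l.
    + intros D s hD hs. apply fle_antisym.
      * rewrite <- (meet_top_r a) at 1. rewrite <- (proj1 hD). apply meet_sup_le.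
        intros b [x <-]. eapply le_sup. exists x. reflexivity. apply fle_refl.
      * apply fsup_least. intros b [x ->]. apply fmeet_l.
Qed.

Definition By {L : frame} {P} (e : P -> P -> L) (y : P) :
  pt L P (sigmaL L P e) -> L :=
  fun p => finf L (fun a => exists W : opens L P (sigmaL L P e),
                     a = fimp (proj1_sig W y) (proj1_sig p W)).

Lemma eval_point {L : frame} {P} (e : P -> P -> L) (y : P) :
  is_point L P (sigmaL L P e) (fun W => proj1_sig W y).
Proof.
  split; [|split].
  - intros A B C h. apply h.
  - intros S C h. apply h.
  - intros lam C h. apply h.
Qed.

Definition eta {L : frame} {P} (e : P -> P -> L) (y : P) : pt L P (sigmaL L P e) :=
  exist _ _ (eval_point e y).

Lemma By_eta {L : frame} {P} (e : P -> P -> L) y : By e y (eta e y) = ftop L.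
Proof.
  apply top_le. apply finf_glb. intros b [W ->]. simpl.
  rewrite imp_top. apply fle_refl. apply fle_refl.
Qed.

Lemma subL_By {L : frame} {P} (e : P -> P -> L) y F :
  spectral L P (sigmaL L P e) F ->
  subL L (pt L P (sigmaL L P e)) (By e y) F = F (eta e y).
Proof.
  intros hF. destruct (spec_eq _ F hF) as [W ->]. simpl. apply fle_antisym.
  - rewrite <- (meet_top_r (subL _ _ _ _)). rewrite <- (By_eta e y).
    apply (subL_le (By e y) (fun p => proj1_sig p W) (eta e y)).
  - apply subL_glb. intros p. eapply fle_trans. apply meet_mono. apply fle_refl.
    apply finf_lb. exists W. reflexivity. apply imp_mp'.
Qed.

Lemma By_sc {L : frame} {P} {e : P -> P -> L} (He : is_Lorder L P e) y :
  super_compact L (pt L P (sigmaL L P e)) (spectral L P (sigmaL L P e)) (By e y).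
Proof.
  split.
  - apply top_le. eapply le_sup. exists (eta e y). reflexivity. rewrite By_eta. apply fle_refl.
  - intros S hS.
    rewrite subL_By by (apply (proj1 (proj2 (spectral_top _ (sigma_Ltop He)))); auto).
    unfold ljoin. apply fsup_ext. intros a. split.
    + intros [F [hF <-]]. exists F. split; auto. apply subL_By; auto.
    + intros [F [hF <-]]. exists F. split; auto. symmetry. apply subL_By; auto.
Qed.

Lemma lsc {L : frame} {P} {e : P -> P -> L} (He : is_Lorder L P e)
  (Hc : continuous_Lordered L P e) :
  locally_super_compact L (pt L P (sigmaL L P e)) (spectral L P (sigmaL L P e)).
Proof.
  intros G hG x. destruct (hG) as [A hA]. apply fle_antisym.
  2:{ apply fsup_least. intros a [B [hB ->]]. unfold interior, ljoin.
      apply meet_sup_le. intros b [H [[_ hH] <-]].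
      eapply fle_trans. apply meet_mono. apply fle_refl. apply hH. apply subL_le. }
  destruct (sigma_Ltop He) as [hm [hj hc]].
  set (cst := fun a : L => exist (sigmaL L P e) (fun _ => a) (hc a)).
  set (UU := fun y => exist (sigmaL L P e) (fun z => waybelow L P e z y) (U_scott He Hc y)).
  set (V := fun y => exist (sigmaL L P e) _ (hm _ _ (proj2_sig (cst (proj1_sig A y))) (proj2_sig (UU y)))).
  rewrite hA.
  rewrite ((proj1 (proj2 (proj2_sig x))) (fun W => exists y, W = V y) A).
  2:{ intros z. rewrite (proj2 (proj2_sig A) (waybelow L P e z) z (proj1 (Hc z)) (proj2 (Hc z))).
      apply fsup_ext. intros a. split.
      - intros [t ->]. exists (V t). split. eauto. reflexivity.
      - intros [W [[t ->] <-]]. exists t. reflexivity. }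
  apply fsup_least. intros a [W [[y ->] <-]].
  rewrite ((proj1 (proj2_sig x)) (cst (proj1_sig A y)) (UU y) (V y)) by reflexivity.
  rewrite ((proj2 (proj2 (proj2_sig x))) (proj1_sig A y) (cst (proj1_sig A y))) by reflexivity.
  eapply le_sup. exists (By e y). split. apply By_sc; auto. reflexivity.
  apply meet_mono.
  - rewrite subL_By by auto. rewrite hA. apply fle_refl.
  - unfold interior, ljoin. eapply le_sup. exists (fun q : pt L P (sigmaL L P e) => proj1_sig q (UU y)).
    split; [split|]. exists (UU y); auto.
    2: reflexivity. 2: apply fle_refl.
    intros q. apply finf_glb. intros b [W ->]. apply fimp_adj.
    set (M := exist (sigmaL L P e) _ (hm _ _ (proj2_sig (UU y)) (proj2_sig (cst (proj1_sig W y))))).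
    rewrite <- ((proj2 (proj2 (proj2_sig q))) (proj1_sig W y) (cst (proj1_sig W y))) by reflexivity.
    rewrite <- ((proj1 (proj2_sig q)) (UU y) (cst (proj1_sig W y)) M) by reflexivity.
    apply point_mono. apply proj2_sig. intros z. simpl.
    eapply fle_trans. apply meet_mono. apply (wb_le He). apply fle_refl.
    rewrite meet_comm. apply (proj1 (proj2_sig W)).
Qed.

Theorem proposition6p2 (L : frame) (P : Type) (e : P -> P -> L)
  (He : is_Lorder L P e) (Hc : continuous_Lordered L P e) :
  is_Ltop L (pt L P (sigmaL L P e)) (spectral L P (sigmaL L P e)) /\
  locally_super_compact L (pt L P (sigmaL L P e)) (spectral L P (sigmaL L P e)) /\
  L_sober L (pt L P (sigmaL L P e)) (spectral L P (sigmaL L P e)).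
Proof.
  split; [|split].
  - apply spectral_top. apply sigma_Ltop; auto.
  - apply lsc; auto.
  - apply spectral_sober.
Qed.
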